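(* Let $f\colon\mathbb{F}_2^n\times\mathbb{F}_2^d\to\mathbb{F}_2^r$ be a strong, linear, lossless condenser for min-entropy $m$ with error $\epsilon$, and for each seed $u$ let $H_u$ be the $r\times n$ matrix with $f(x,u)=H_ux$ and $\mathcal{C}_u:=\{x\in\mathbb{F}_2^n:H_ux=0\}$. Let $\mathcal{Z}$ be a flat distribution on $\mathbb{F}_2^n$ with entropy $m$. Then for at least a $1-2\sqrt{\epsilon}$ fraction of the choices of $u\in\mathbb{F}_2^d$, we have $\mathcal{E}(\mathcal{C}_u,\mathcal{Z})\le\sqrt{\epsilon}$.
   Context: Statistical distance is half the $\ell_1$ distance. A flat distribution of entropy $m$ is the uniform distribution on a set of size $2^m$. $f$ is a strong lossless condenser for min-entropy $m$ with error $\epsilon$ if for every distribution $\mathcal{X}$ on $\mathbb{F}_2^n$ with min-entropy at least $m$ (all probabilities at most $2^{-m}$), $X\sim\mathcal{X}$, and independent uniform $U\in\mathbb{F}_2^d$, $(U,f(X,U))$ is within statistical distance $\epsilon$ of some distribution $(\mathcal{U}_d,\mathcal{Y})$ of min-entropy at least $d+m$; linear means $f(\cdot,u)$ is linear for each $u$. Consider the additive noise channel which, on input $x\in\mathbb{F}_2^n$, outputs $x+z$ with $z\sim\mathcal{Z}$ independent of $x$. The brute-force decoder for $\mathcal{C}_u$, given $\hat{y}$, finds a codeword $y\in\mathcal{C}_u$ and $z\in\mathrm{supp}(\mathcal{Z})$ with $\hat{y}=y+z$ and outputs $y$ (with arbitrary choice among several such $y$, and an arbitrary codeword if none exists). $\mathcal{E}(\mathcal{C}_u,\mathcal{Z})$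 denotes its error probability, which we take to be $\max_{x\in\mathcal{C}_u}\Pr_{z\sim\mathcal{Z}}[\exists x'\in\mathcal{C}_u,\exists z'\in\mathrm{supp}(\mathcal{Z})\setminus\{z\}: x+z=x'+z']$ (the probability that the decoder may fail to output the transmitted codeword). *)

(* Defs.v *)
From mathcomp Require Import all_boot all_order all_algebra.
Set Implicit Arguments. Unset Strict Implicit. Unset Printing Implicit Defensive.
Import Order.TTheory GRing.Theory Num.Theory.
Local Open Scope ring_scope.

Definition is_distr (R : numDomainType) (T : finType) (P : T -> R) : Prop :=
  (forall t, 0 <= P t) /\ \sum_t P t = 1.

Definition min_entropy_ge (R : numFieldType) (T : finType) (P : T -> R) (k : nat) : Prop :=
  forall t, P t <= (2 ^+ k)^-1.

Definition stat_dist (R : numDomainType) (T : finType) (P Q : T -> R) : R :=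
  2^-1 * \sum_t `|P t - Q t|.

(* distribution of (U, f(X,U)) with U uniform on F_2^d independent of X *)
Definition seed_output_distr (R : numFieldType) (n d r : nat)
  (f : 'cV['F_2]_n -> 'cV['F_2]_d -> 'cV['F_2]_r) (X : 'cV['F_2]_n -> R)
  : 'cV['F_2]_d * 'cV['F_2]_r -> R :=
  fun p => (2 ^+ d)^-1 * \sum_(x | f x p.1 == p.2) X x.

Definition strong_lossless_condenser (R : numFieldType) (n d r : nat)
  (f : 'cV['F_2]_n -> 'cV['F_2]_d -> 'cV['F_2]_r) (m : nat) (eps : R) : Prop :=
  forall X : 'cV['F_2]_n -> R, is_distr X -> min_entropy_ge X m ->
  exists Y : 'cV['F_2]_d * 'cV['F_2]_r -> R,
    [/\ is_distr Y,
        (forall u, \sum_y Y (u, y) = (2 ^+ d)^-1),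
        min_entropy_ge Y (d + m)
      & stat_dist (seed_output_distr f X) Y <= eps].

Definition linear_seeded (n d r : nat)
  (f : 'cV['F_2]_n -> 'cV['F_2]_d -> 'cV['F_2]_r) : Prop :=
  forall u, (forall x y, f (x + y) u = f x u + f y u) /\
            (forall (a : 'F_2) x, f (a *: x) u = a *: f x u).

(* uniform distribution on S (flat; entropy m when #|S| = 2^m) *)
Definition flat_distr (R : numFieldType) (T : finType) (S : {set T}) : T -> R :=
  fun t => if t \in S then (#|S|%:R)^-1 else 0.

Definition code_of (n d r : nat) (H : 'cV['F_2]_d -> 'M['F_2]_(r, n)) (u : 'cV['F_2]_d)
  : {set 'cV['F_2]_n} := [set x | H u *m x == 0].

(* error probability of the brute-force decoder for code C under additive noise Z:
   max over x in C of Pr_{z ~ Z}[exists x' in C, z' in supp Z \ {z}, x+z = x'+z'] *)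
Definition error_prob (R : realDomainType) (n : nat) (C : {set 'cV['F_2]_n})
  (Z : 'cV['F_2]_n -> R) : R :=
  \big[Num.max/0]_(x in C)
     \sum_(z | [exists x' in C, exists z',
                  [&& Z z' != 0, z' != z & x + z == x' + z']]) Z z.

(* Main.v *)
Require Import Defs.
From mathcomp Require Import all_boot all_order all_algebra.
Import Order.TTheory GRing.Theory Num.Theory.
Set Implicit Arguments. Unset Strict Implicit.
Local Open Scope ring_scope.

Lemma sum_flat (R : numFieldType) (T : finType) (S : {set T}) (p : pred T) :
  \sum_(x | p x) flat_distr R S x = #|[set x in S | p x]|%:R / #|S|%:R.
Proof.
rewrite big_mkcond /= mulr_natl -sumr_const.
rewrite [in RHS]big_mkcond /=; apply: eq_bigr => x _.
by rewrite /flat_distr inE; case: (x \in S); case: (p x).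
Qed.

Lemma flat_le (R : numFieldType) (T : finType) (S B : {set T}) (p : pred T) :
  (forall x, x \in S -> p x -> x \in B) ->
  \sum_(x | p x) flat_distr R S x <= #|B|%:R / #|S|%:R.
Proof.
move=> hB; rewrite sum_flat ler_wpM2r ?invr_ge0 ?ler0n // ler_nat.
by apply: subset_leq_card; apply/subsetP => x; rewrite inE => /andP[/hB].
Qed.

Definition collB n d r (H : 'cV['F_2]_d -> 'M['F_2]_(r, n)) (S : {set 'cV['F_2]_n}) u :=
  [set z in S | [exists z', [&& z' \in S, z' != z & H u *m z' == H u *m z]]].

Lemma err_le (R : rcfType) n d r (H : 'cV['F_2]_d -> 'M['F_2]_(r, n)) S u :
  error_prob (code_of H u) (flat_distr R S) <= #|collB H S u|%:R / #|S|%:R.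
Proof.
rewrite /error_prob; apply: bigmax_le => [|x xC].
  by rewrite mulr_ge0 ?invr_ge0 ?ler0n.
apply: flat_le => z zS /existsP[x' /andP[x'C /existsP[z' /and3P[Zz' z'z e]]]].
rewrite inE zS /=; apply/existsP; exists z'.
have z'S : z' \in S.
  by move: Zz'; rewrite /flat_distr; case: (z' \in S); rewrite ?eqxx.
rewrite z'S z'z /=.
move: xC x'C; rewrite !inE => /eqP h1 /eqP h2.
move/eqP: e => /(congr1 (mulmx (H u))); rewrite !mulmxDr h1 h2 !add0r => ->.
by [].
Qed.
From mathcomp Require Import ring lra.

Lemma sum_pair (R : numDomainType) (A B : finType) (F : A * B -> R) :
  \sum_p F p = \sum_a \sum_b F (a, b).
Proof. by rewrite pair_big; apply: eq_bigr => -[]. Qed.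

Lemma normE2 (R : realDomainType) (a : R) : `|a| = 2 * Num.max a 0 - a.
Proof.
rewrite maxEle; case: leP => ha.
  rewrite ler0_norm //; lra.
rewrite gtr0_norm //; lra.
Qed.

Lemma cardV d : #|{: 'cV['F_2]_d}| = (2 ^ d)%N.
Proof. by rewrite card_mx card_Fp // muln1. Qed.

Lemma sum_k n d r (H : 'cV['F_2]_d -> 'M['F_2]_(r, n)) (B : {set 'cV['F_2]_n}) u :
  (\sum_y #|[set z in B | H u *m z == y]|)%N = #|B|.
Proof.
rewrite -sum1_card (partition_big (fun z => H u *m z) xpredT) //=.
apply: eq_bigr => y _; rewrite -sum1_card; apply: eq_bigl => z; by rewrite inE.
Qed.

Lemma final_arith (R : realFieldType) (s N b g E : R) :
  0 <= s -> 0 < N -> g = N - b -> b * s <= E -> E <= 2 * s ^+ 2 * N ->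
  (s = 0 -> b = 0) -> (1 - 2 * s) * N <= g.
Proof.
move=> s0 N0 -> h1 h2 h3.
have [s_eq|s_pos] := eqVneq s 0.
  by rewrite (h3 s_eq) s_eq; lra.
have sp : 0 < s by rewrite lt0r s_pos.
have : b * s <= 2 * s * N * s by rewrite expr2 in h2; nra.
rewrite ler_pM2r // => h; nra.
Qed.

Theorem mainTheorem17 (R : rcfType) (n d r m : nat) (eps : R)
  (f : 'cV['F_2]_n -> 'cV['F_2]_d -> 'cV['F_2]_r)
  (H : 'cV['F_2]_d -> 'M['F_2]_(r, n)) (S : {set 'cV['F_2]_n}) :
  strong_lossless_condenser f m eps ->
  linear_seeded f ->
  (forall x u, f x u = H u *m x) ->
  #|S| = (2 ^ m)%N ->
  1 - 2 * Num.sqrt eps <=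
    #|[set u : 'cV['F_2]_d |
        error_prob (code_of H u) (flat_distr R S) <= Num.sqrt eps]|%:R / 2 ^+ d.
Proof.
move=> cond _ fH cardS.
have cS : #|S|%:R = 2 ^+ m :> R by rewrite cardS natrX.
have S0 : (0 < #|S|%:R :> R) by rewrite cS exprn_gt0.
set X := flat_distr R S.
have dX : is_distr X.
  split=> [t|]; first by rewrite /X /flat_distr; case: ifP => // _; rewrite invr_ge0 ler0n.
  rewrite (eq_bigl xpredT) // sum_flat.
  have -> : #|[set x in S | xpredT x]| = #|S| by apply: eq_card => x; rewrite inE andbT.
  by rewrite mulfV // lt0r_neq0.
have mX : min_entropy_ge X m.
  move=> t; rewrite /X /flat_distr; case: ifP => _; first by rewrite cS.
  by rewrite invr_ge0 exprn_ge0.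
have [Y [dY _ minY sd]] := cond X dX mX.
set P := seed_output_distr f X.
set c := fun u y => #|[set z in S | H u *m z == y]|.
set k := fun u y => #|[set z in collB H S u | H u *m z == y]|.
set K := (2 ^+ d : R)^-1 * (2 ^+ m)^-1.
have K0 : 0 < K by rewrite mulr_gt0 // invr_gt0 exprn_gt0.
have Pval : forall u y, P (u, y) = K * (c u y)%:R.
  move=> u y; rewrite /P /seed_output_distr /=.
  rewrite (eq_bigl (fun x => H u *m x == y)); last by move=> x; rewrite fH.
  by rewrite sum_flat cS /K mulrA [RHS]mulrAC.
have cardVd : #|{: 'cV['F_2]_d}|%:R = 2 ^+ d :> R by rewrite cardV natrX.
have sumP : \sum_p P p = 1.
  rewrite sum_pair.
  transitivity (\sum_(u : 'cV['F_2]_d) (2 ^+ d : R)^-1).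
    apply: eq_bigr => u _.
    rewrite /P /seed_output_distr /= -mulr_sumr.
    suff -> : \sum_y \sum_(x | f x u == y) X x = 1 by rewrite mulr1.
    by rewrite -[RHS](proj2 dX) [RHS](partition_big (fun x => f x u) xpredT).
  rewrite sumr_const.
  have -> : #|xpredT : pred 'cV['F_2]_d| = (2 ^ d)%N by rewrite -cardV; apply: eq_card.
  by rewrite -(mulr_natr ((2 ^+ d : R)^-1) (2 ^ d)) natrX mulVf // expf_neq0 // pnatr_eq0.
have hkey : \sum_p Num.max (P p - Y p) 0 <= eps.
  move: sd; rewrite /stat_dist (eq_bigr _ (fun t _ => normE2 _)) -/P.
  by rewrite sumrB -mulr_sumr sumrB sumP (proj2 dY) subrr subr0 mulrA mulVf ?pnatr_eq0 // mul1r.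
have pt : forall u y, K * (k u y)%:R / 2 <= Num.max (P (u, y) - Y (u, y)) 0.
  move=> u y; rewrite maxEle; case: (leP (P (u, y) - Y (u, y)) 0) => h.
    have -> : k u y = 0%N.
      apply/eqP; rewrite cards_eq0; apply/eqP/setP => z; rewrite !inE.
      apply/negbTE/negP => /andP[/andP[zS /existsP[z' /and3P[z'S z'z e]]] /eqP ez].
      have c2 : (2 <= c u y)%N.
        apply: (@leq_trans #|[set z'; z]|); first by rewrite cards2 z'z.
        apply: subset_leq_card; apply/subsetP => w.
        by rewrite !inE => /orP[]/eqP->; rewrite ?z'S ?zS ?(eqP e) ?ez eqxx.
      move: h; rewrite Pval.
      have := minY (u, y); rewrite exprD invfM -/K => hY hP.
      have : 2 <= (c u y)%:R :> R by rewrite (ler_nat R 2).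
      nra.
    by rewrite mulr0 mul0r.
  have := minY (u, y); rewrite exprD invfM -/K => hY.
  rewrite Pval.
  have kc : (k u y)%:R <= (c u y)%:R :> R.
    rewrite ler_nat; apply: subset_leq_card; apply/subsetP => z.
    by rewrite !inE => /andP[/andP[-> _] ->].
  case: (posnP (k u y)) => [->|kpos]; first by rewrite mulr0 mul0r; move: h; rewrite Pval; lra.
  have c2 : 2 <= (c u y)%:R :> R.
    have /card_gt0P[z] := kpos; rewrite !inE => /andP[/andP[zS /existsP[z' /and3P[z'S z'z e]]] /eqP ez].
    rewrite (ler_nat R 2); apply: (@leq_trans #|[set z'; z]|); first by rewrite cards2 z'z.
    apply: subset_leq_card; apply/subsetP => w.
    by rewrite !inE => /orP[]/eqP->; rewrite ?z'S ?zS ?(eqP e) ?ez eqxx.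
  nra.
set e := fun u => #|collB H S u|%:R / #|S|%:R : R.
have e0 : forall u, 0 <= e u by move=> u; rewrite /e divr_ge0 ?ler0n.
have lb : \sum_u K * #|collB H S u|%:R / 2 <= eps.
  apply: le_trans hkey; rewrite sum_pair; apply: ler_sum => u _.
  rewrite -(sum_k H (collB H S u) u) natr_sum mulr_sumr mulr_suml.
  by apply: ler_sum => y _; exact: pt.
have N0 : (2 ^+ d : R) != 0 by rewrite expf_neq0 // pnatr_eq0.
have M0 : (2 ^+ m : R) != 0 by rewrite expf_neq0 // pnatr_eq0.
have sumeE : \sum_u e u = 2 * 2 ^+ d * \sum_u K * #|collB H S u|%:R / 2.
  rewrite mulr_sumr; apply: eq_bigr => u _; rewrite /e /K cS; field.
  by rewrite N0 M0.
have Npos : (0 : R) < 2 ^+ d by rewrite exprn_gt0.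
have sume : \sum_u e u <= 2 * eps * 2 ^+ d.
  rewrite sumeE; nra.
have eps0 : 0 <= eps.
  apply: le_trans hkey; apply: sumr_ge0 => p _; rewrite maxEle; case: ifP => // /negbT.
  by rewrite -ltNge => /ltW.
have s0 := sqrtr_ge0 eps.
have ss := sqr_sqrtr eps0.
set s := Num.sqrt eps in s0 ss *.
set Good := [set u | _].
have bad : forall u, u \in ~: Good -> s < e u.
  move=> u; rewrite !inE -ltNge => h; apply: lt_le_trans h _; exact: err_le.
have eusum : forall u, e u <= \sum_v e v.
  move=> u; rewrite (bigD1 u) //=; apply: ler_wpDr => //; exact: sumr_ge0.
have hsum : #|~: Good|%:R * s <= \sum_u e u.
  rewrite mulr_natl -sumr_const [X in _ <= X](bigID (fun u => u \in ~: Good)) /=.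
  apply: ler_wpDr; first exact: sumr_ge0.
  by apply: ler_sum => u hu; apply: ltW; apply: bad.
have cG : #|Good|%:R = 2 ^+ d - #|~: Good|%:R :> R.
  by rewrite -natrX -cardV -(cardsC Good) natrD addrK.
rewrite ler_pdivlMr //.
apply: (final_arith s0 Npos cG hsum); first by rewrite ss.
move=> s_eq; have -> : #|~: Good| = 0%N; last by [].
apply/eqP; rewrite cards_eq0; apply/eqP/setP => u; rewrite in_set0.
apply/negbTE/negP => hu.
have h1 : \sum_u e u <= 0 by move: sume; rewrite -ss s_eq expr0n mulr0 mul0r.
have := lt_le_trans (bad u hu) (le_trans (eusum u) h1).
by rewrite ltNge s0.
Qed.
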